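(* Let $G$ be a finite graph and let $k$ be an integer with $k>\chi(G)+1$. Then $G$ is determined up to isomorphism by the Kempe-recolouring graph $\mathcal{K}_k(G)$, even without knowing the value of $k$: if $G'$ is another finite graph and $k'>\chi(G')+1$ is an integer with $\mathcal{K}_k(G)\cong\mathcal{K}_{k'}(G')$, then $G\cong G'$.
   Context: All graphs are finite and simple. A $k$-colouring of $G$ is a map $c:V(G)\to\{1,\dots,k\}$ with $c(u)\neq c(v)$ for every edge $uv$. Given a $k$-colouring $c$, two distinct colours $i,j$, and a connected component $H$ of the subgraph of $G$ induced by $c^{-1}(\{i,j\})$, the Kempe swap on $H$ produces the colouring obtained from $c$ by exchanging colours $i$ and $j$ on the vertices of $H$. The $k$-Kempe-recolouring graph $\mathcal{K}_k(G)$ has as vertices all $k$-colourings of $G$, two distinct colourings being adjacent if and only if one is obtained from the other by a single Kempe swap. (Recolouring a single vertex to a colour absent from its neighbourhood is a special case, a trivial Kempe swap.) *)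

(* Defs.v *)
From mathcomp Require Import all_boot.
Set Implicit Arguments. Unset Strict Implicit. Unset Printing Implicit Defensive.

Record graph := Graph {
  vert : finType;
  adj : rel vert;
  adj_sym : symmetric adj;
  adj_irr : irreflexive adj }.

Section Colourings.
Variable G : graph.
Local Notation V := (vert G).

(* proper k-colouring with colours 'I_k (i.e. {0,..,k-1} standing for {1,..,k}) *)
Definition proper (k : nat) (c : {ffun V -> 'I_k}) : bool :=
  [forall u, forall v, adj u v ==> (c u != c v)].

Definition colouring (k : nat) := {c : {ffun V -> 'I_k} | proper c}.

Definition colourable (k : nat) : bool := [exists c : {ffun V -> 'I_k}, proper c].

Lemma colourable_card : exists k, colourable k.
Proof.
exists #|V|; apply/existsP; exists [ffun v => enum_rank v].
apply/forallP=> u; apply/forallP=> v; apply/implyP=> huv; rewrite !ffunE.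
apply/negP=> /eqP /enum_rank_inj Euv; subst v.
by rewrite (@adj_irr G) in huv.
Qed.

Definition chromatic_number : nat := ex_minn colourable_card.

(* Kempe swap: colours i j, component of the subgraph induced by c^-1({i,j})
   containing the vertex v (v must have colour i or j). *)
Definition kempe_rel (k : nat) (c : {ffun V -> 'I_k}) (i j : 'I_k) : rel V :=
  fun x y => [&& adj x y, c x \in [:: i; j] & c y \in [:: i; j]].

Definition kempe_comp (k : nat) (c : {ffun V -> 'I_k}) (i j : 'I_k) (v : V)
  : {set V} := [set w | connect (kempe_rel c i j) v w].

Definition kempe_swap (k : nat) (c : {ffun V -> 'I_k}) (i j : 'I_k) (v : V)
  : {ffun V -> 'I_k} :=
  [ffun w => if w \in kempe_comp c i j v then
               (if c w == i then j else i) else c w].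

Definition kempe_step (k : nat) (c d : {ffun V -> 'I_k}) : Prop :=
  exists (i j : 'I_k) (v : V), [/\ i != j, c v \in [:: i; j] &
                                  d = kempe_swap c i j v].

Definition kempe_adj (k : nat) (c d : colouring k) : Prop :=
  c != d /\ (kempe_step (val c) (val d) \/ kempe_step (val d) (val c)).

End Colourings.

Definition kempe_graph_iso (G : graph) (k : nat) (G' : graph) (k' : nat) : Prop :=
  exists f : colouring G k -> colouring G' k',
    bijective f /\ forall c d, kempe_adj c d <-> kempe_adj (f c) (f d).

Definition graph_iso (G G' : graph) : Prop :=
  exists f : vert G -> vert G',
    bijective f /\ forall x y, adj x y = adj (f x) (f y).

(* Main.v *)
Require Import Defs.
From mathcomp Require Import all_boot.
Set Implicit Arguments. Unset Strict Implicit. Unset Printing Implicit Defensive.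

Section Basic.
Variable G : graph.
Local Notation V := (vert G).
Variable k : nat.
Implicit Types (c d e : {ffun V -> 'I_k}) (i j p q r s : 'I_k).

Lemma krel_sym c i j : symmetric (kempe_rel c i j).
Proof.
move=> x y; rewrite /kempe_rel (@adj_sym G x y).
by case: (adj y x); case: (c x \in _); case: (c y \in _).
Qed.

Lemma comp_refl c i j v : v \in kempe_comp c i j v.
Proof. by rewrite inE connect0. Qed.

Lemma comp_col c i j v w : c v \in [:: i; j] -> w \in kempe_comp c i j v ->
  c w \in [:: i; j].
Proof.
move=> hv; rewrite inE => /connectP [pth].
elim: pth v hv => [|y pth IH] v hv /=; first by move=> _ ->.
move=> /andP [hvy hp] hw; apply: (IH y) => //.
by move: hvy; rewrite /kempe_rel => /and3P [].
Qed.

Lemma comp_same c i j v1 v2 w : w \in kempe_comp c i j v1 ->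
  w \in kempe_comp c i j v2 -> kempe_comp c i j v1 = kempe_comp c i j v2.
Proof.
rewrite !inE => h1 h2; apply/setP => x; rewrite !inE.
have hs := sym_connect_sym (krel_sym c i j).
rewrite (same_connect hs h1) (same_connect hs h2) //.
Qed.

Lemma comp_nontriv c i j v w : w \in kempe_comp c i j v -> w != v ->
  exists y, [/\ y \in kempe_comp c i j v, adj v y & c y \in [:: i; j]].
Proof.
rewrite inE => /connectP [[|y pth]] /=; first by move=> _ ->; rewrite eqxx.
move=> /andP [hvy hp] _ _; exists y; split.
- by rewrite inE; apply: connect1.
- by move: hvy => /and3P [].
- by move: hvy => /and3P [].
Qed.

Definition peq i j p q := forall x : 'I_k, (x \in [:: i; j]) = (x \in [:: p; q]).

Lemma peq_comp c i j p q v : peq i j p q -> kempe_comp c i j v = kempe_comp c p q v.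
Proof.
move=> h; apply/setP => x; rewrite !inE; apply: eq_connect => a b.
by rewrite /kempe_rel !h.
Qed.

Lemma colset_comp c d i j v : (forall x, (c x \in [:: i; j]) = (d x \in [:: i; j])) ->
  kempe_comp c i j v = kempe_comp d i j v.
Proof.
move=> h; apply/setP => x; rewrite !inE; apply: eq_connect => a b.
by rewrite /kempe_rel !h.
Qed.

Lemma two_common i j p q (a b : 'I_k) : a != b -> a \in [:: i; j] -> b \in [:: i; j] ->
  a \in [:: p; q] -> b \in [:: p; q] -> peq i j p q.
Proof.
rewrite !inE => ab ha hb ha' hb' x; rewrite !inE.
case/orP: ha => /eqP ?; case/orP: hb => /eqP ?; subst;
  rewrite ?eqxx in ab => //;
case/orP: ha' => /eqP ?; case/orP: hb' => /eqP ?; subst; rewrite ?eqxx in ab => //;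
by rewrite orbC.
Qed.

Lemma three_in_pair i j (a b x : 'I_k) : a \in [:: i; j] -> b \in [:: i; j] ->
  x \in [:: i; j] -> a != x -> b != x -> a = b.
Proof.
rewrite !inE => ha hb hx ax bx.
case/orP: ha => /eqP ?; case/orP: hb => /eqP ?; case/orP: hx => /eqP ?; subst => //;
by rewrite eqxx in ax bx.
Qed.


Definition kdata c d i j v :=
  [/\ i != j, c v \in [:: i; j],
      forall w, (c w != d w) = (w \in kempe_comp c i j v) &
      forall w, (c w \in [:: i; j]) = (d w \in [:: i; j])].

Lemma step_data c d : kempe_step c d -> exists i j v, kdata c d i j v.
Proof.
move=> [i [j [v [ij hv ->]]]]; exists i, j, v; split => // w; rewrite ffunE.
- case hw: (w \in kempe_comp c i j v); last by rewrite eqxx.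
  have := comp_col hv hw; rewrite !inE.
  case: (c w =P i) => [->|_] /=; first by [].
  by move=> /eqP ->; rewrite eq_sym.
- case hw: (w \in kempe_comp c i j v) => //.
  by rewrite (comp_col hv hw); case: (c w == i); rewrite !inE eqxx ?orbT.
Qed.

Lemma data_sym c d i j v : kdata c d i j v -> kdata d c i j v.
Proof.
move=> [ij hv hd hc].
have E := colset_comp v hc.
split.
- by [].
- by rewrite -hc.
- by move=> w; rewrite eq_sym hd E.
- by move=> w; rewrite hc.
Qed.

Lemma data_colc c d i j v w : kdata c d i j v -> c w != d w -> c w \in [:: i; j].
Proof. by move=> [ij hv hd hc]; rewrite hd; apply: comp_col. Qed.

Lemma data_cold c d i j v w : kdata c d i j v -> c w != d w -> d w \in [:: i; j].
Proof. by move=> D h; case: (D) => _ _ _ hc; rewrite -hc; apply: data_colc D h. Qed.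

Lemma data_nonempty c d i j v : kdata c d i j v -> c v != d v.
Proof. by move=> [ij hv hd hc]; rewrite hd comp_refl. Qed.

End Basic.

Lemma adj_data (G : graph) k (c d : colouring G k) : kempe_adj c d ->
  exists i j v, kdata (val c) (val d) i j v.
Proof.
move=> [_ [h|h]]; first exact: step_data.
by have [i [j [v D]]] := step_data h; exists i, j, v; apply: data_sym.
Qed.

Section Single.
Variable G : graph.
Local Notation V := (vert G).
Variable k : nat.
Implicit Types (c d e : {ffun V -> 'I_k}) (i j p q r s : 'I_k).

Lemma properP c (x y : V) : Defs.proper c -> adj x y -> c x != c y.
Proof. by move=> /forallP /(_ x) /forallP /(_ y) /implyP; apply. Qed.

Lemma adj_neq (x y : V) : adj x y -> x != y.
Proof. by apply: contraTneq => ->; rewrite (@adj_irr G). Qed.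

Lemma single_step c d v : Defs.proper c -> Defs.proper d -> c v != d v ->
  (forall w, w != v -> c w = d w) -> kempe_step c d.
Proof.
move=> pc pd cdv hw; exists (c v), (d v), v; split => //; first by rewrite !inE eqxx.
have sub : forall w, w \in kempe_comp c (c v) (d v) v -> w = v.
  move=> w hwc; apply/eqP; apply/negP => /negP wv.
  have [y [hy avy cy]] := comp_nontriv hwc wv.
  have := properP pc avy; move: cy; rewrite !inE => /orP [/eqP -> | /eqP cy]; first by rewrite eqxx.
  move=> _; have yv : y != v by rewrite eq_sym adj_neq.
  have := properP pd avy; by rewrite -(hw y yv) cy eqxx.
apply/ffunP => w; rewrite ffunE.
case: (w =P v) => [->|wv]; first by rewrite comp_refl eqxx.
case: ifP => [/sub/wv //|_]; by rewrite hw //; apply/eqP.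
Qed.


Lemma tri_sub c d e i j v1 p q v2 r s v3 :
  kdata c d i j v1 -> kdata c e p q v2 -> kdata d e r s v3 ->
  (forall w, c w != d w -> c w != e w) -> forall w, c w != e w -> c w != d w.
Proof.
move=> D1 D2 D3 S12 w cew; apply/negP => /eqP cdw.
have dew : d w != e w by rewrite -cdw.
have pqrs : peq p q r s.
  apply: (two_common dew).
  - by rewrite -cdw (data_colc D2 cew).
  - exact: (data_cold D2 cew).
  - exact: (data_colc D3 dew).
  - exact: (data_cold D3 dew).
have h1 := data_nonempty D1.
have h1e := S12 _ h1.
have hdv : d v1 \in [:: p; q].
  case: (d v1 =P e v1) => [->|/eqP ne]; first exact: (data_cold D2 h1e).
  by rewrite pqrs (data_colc D3 ne).
have ijpq : peq i j p q.
  apply: (two_common h1 (data_colc D1 h1) (data_cold D1 h1) (data_colc D2 h1e) hdv).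
case: (D1) => _ _ hd1 _; case: (D2) => _ _ hd2 _.
have E1 : kempe_comp c p q v1 = kempe_comp c p q v2.
  apply: (comp_same (w := v1)); first exact: comp_refl.
  by rewrite -hd2.
move: cew; rewrite hd2 -E1 -(peq_comp _ _ ijpq) -hd1 cdw eqxx.
by [].
Qed.

Lemma tri_both c d e i j v1 p q v2 r s v3 w1 w2 :
  kdata c d i j v1 -> kdata c e p q v2 -> kdata d e r s v3 ->
  c w1 != d w1 -> c w1 = e w1 -> c w2 != e w2 -> c w2 = d w2 -> False.
Proof.
move=> D1 D2 D3 h1 e1 h2 e2.
have de1 : d w1 != e w1 by rewrite -e1 eq_sym.
have de2 : d w2 != e w2 by rewrite -e2.
have ijrs : peq i j r s.
  apply: (two_common de1).
  - exact: (data_cold D1 h1).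
  - by rewrite -e1 (data_colc D1 h1).
  - exact: (data_colc D3 de1).
  - exact: (data_cold D3 de1).
have pqrs : peq p q r s.
  apply: (two_common de2).
  - by rewrite -e2 (data_colc D2 h2).
  - exact: (data_cold D2 h2).
  - exact: (data_colc D3 de2).
  - exact: (data_cold D3 de2).
case: (D1) => _ _ hd1 hc1; case: (D2) => _ _ hd2 _; case: (D3) => _ _ hd3 _.
have E3 : kempe_comp d r s v3 = kempe_comp c r s v3.
  apply: esym; apply: colset_comp => x; by rewrite -!ijrs hc1.
have S1 : forall x, (c x != d x) = (x \in kempe_comp c r s v1).
  by move=> x; rewrite hd1 (peq_comp _ _ ijrs).
have S2 : forall x, (c x != e x) = (x \in kempe_comp c r s v2).
  by move=> x; rewrite hd2 (peq_comp _ _ pqrs).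
have S3 : forall x, (d x != e x) = (x \in kempe_comp c r s v3).
  by move=> x; rewrite hd3 E3.
have A1 : kempe_comp c r s v1 = kempe_comp c r s v3.
  by apply: (comp_same (w := w1)); rewrite -?S1 -?S3.
have A2 : kempe_comp c r s v2 = kempe_comp c r s v3.
  by apply: (comp_same (w := w2)); rewrite -?S2 -?S3.
move: h1; rewrite S1 A1 -A2 -S2 e1 eqxx.
by [].
Qed.

Lemma triangle_ff c d e i j v1 p q v2 r s v3 : Defs.proper c ->
  kdata c d i j v1 -> kdata c e p q v2 -> kdata d e r s v3 -> d != e ->
  exists v, forall w, w != v -> c w = d w /\ c w = e w.
Proof.
move=> pc D1 D2 D3 de.
case: (boolP [exists w, (c w != d w) && (c w == e w)]) => [/existsP [w1 /andP [h1 /eqP e1]]|n1].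
  case: (boolP [exists w, (c w != e w) && (c w == d w)]) => [/existsP [w2 /andP [h2 /eqP e2]]|n2].
    by case: (tri_both D1 D2 D3 h1 e1 h2 e2).
  have S21 : forall w, c w != e w -> c w != d w.
    move=> w h; apply/negP => hcd.
    by move/existsP: n2; apply; exists w; rewrite h hcd.
  have := tri_sub D2 D1 (data_sym D3) S21 h1.
  by rewrite e1 eqxx.
have S12 : forall w, c w != d w -> c w != e w.
  move=> w h; apply/negP => hce.
  by move/existsP: n1; apply; exists w; rewrite h hce.
have S21 := tri_sub D1 D2 D3 S12.
case: (D1) => _ _ hd1 _.
have single : forall w, w != v1 -> c w = d w.
  move=> w wv; case: (c w =P d w) => // /eqP; rewrite hd1 => hw; exfalso.
  have [y [hy avy cy]] := comp_nontriv hw wv.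
  have hy' : c y != d y by rewrite hd1.
  have h1 := data_nonempty D1.
  have ijpq : peq i j p q.
    apply: (two_common (properP pc avy) (data_colc D1 h1) cy
             (data_colc D2 (S12 _ h1)) (data_colc D2 (S12 _ hy'))).
  have : d = e.
    apply/ffunP => x; case: (c x =P d x) => [cdx|/eqP ncd].
      have : ~~ (c x != e x) by apply/negP => /S21; rewrite cdx eqxx.
      by rewrite negbK -cdx => /eqP.
    have nce := S12 _ ncd.
    apply: (three_in_pair (data_cold D1 ncd) _ (data_colc D1 ncd)).
    all: try by rewrite eq_sym.
    by rewrite ijpq (data_cold D2 nce).
  by move=> E; move: de; rewrite E eqxx.
exists v1 => w wv; split; first exact: single.
case: (c w =P e w) => // /eqP /S21; by rewrite single // eqxx.
Qed.

End Single.

Lemma adj_neqv (G : graph) k (c d : colouring G k) : kempe_adj c d -> val c != val d.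
Proof. by move=> [cd _]; apply: contra cd => /eqP /val_inj ->. Qed.

Lemma triangle (G : graph) k (c d e : colouring G k) :
  kempe_adj c d -> kempe_adj c e -> kempe_adj d e ->
  exists v, forall w, w != v -> val c w = val d w /\ val c w = val e w.
Proof.
move=> hcd hce hde.
have [i [j [v1 D1]]] := adj_data hcd.
have [p [q [v2 D2]]] := adj_data hce.
have [r [s [v3 D3]]] := adj_data hde.
exact: (triangle_ff (valP c) D1 D2 D3 (adj_neqv hde)).
Qed.

Lemma kadj_single (G : graph) k (c d : colouring G k) v :
  val c v != val d v -> (forall w, w != v -> val c w = val d w) -> kempe_adj c d.
Proof.
move=> hv hw; split.
  by apply/negP => /eqP E; move: hv; rewrite E eqxx.
by left; apply: (single_step (valP c) (valP d) hv hw).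
Qed.

Definition upd (G : graph) k (c : {ffun vert G -> 'I_k}) v a :=
  [ffun w => if w == v then a else c w].

Lemma proper_upd (G : graph) k (c : {ffun vert G -> 'I_k}) v a :
  Defs.proper c -> (forall w, adj v w -> c w != a) -> Defs.proper (upd c v a).
Proof.
move=> pc ha; apply/forallP => x; apply/forallP => y; apply/implyP => axy.
rewrite !ffunE.
case: (x =P v) => [xv|xv]; case: (y =P v) => [yv|yv].
- by move: axy; rewrite xv yv (@adj_irr G).
- by rewrite eq_sym; apply: ha; rewrite -xv.
- by apply: ha; rewrite -yv (@adj_sym G).
- exact: properP.
Qed.

Definition tri (G : graph) k (c x : colouring G k) :=
  kempe_adj c x /\ exists t, kempe_adj c t /\ kempe_adj x t.

Lemma tri_single (G : graph) k (c x : colouring G k) :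
  tri c x -> exists v, val c v != val x v /\ forall w, w != v -> val c w = val x w.
Proof.
move=> [hcx [t [hct hxt]]].
have [v hv] := triangle hcx hct hxt.
exists v; split; last by move=> w /hv [].
apply/negP => /eqP E; move: (adj_neqv hcx); apply/negP; rewrite negbK.
by apply/eqP/ffunP => w; case: (w =P v) => [->//|/eqP/hv []].
Qed.

Lemma kadj_sym (G : graph) k (c d : colouring G k) : kempe_adj c d -> kempe_adj d c.
Proof. by move=> [cd [h|h]]; split; rewrite 1?eq_sym //; [right|left]. Qed.

Definition merge (G : graph) k (B X Y : {ffun vert G -> 'I_k}) u v :=
  [ffun w => if w == u then X w else if w == v then Y w else B w].

Lemma merge_sym (G : graph) k (B X Y : {ffun vert G -> 'I_k}) u v :
  u != v -> merge B X Y u v = merge B Y X v u.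
Proof.
move=> uv; apply/ffunP => w; rewrite !ffunE.
case: (w =P u) => [->|_]; last by [].
by rewrite (negbTE uv).
Qed.

Lemma sq_half (G : graph) k (B X Y Z : colouring G k) u v :
  u != v -> ~~ adj u v -> tri B Y ->
  val B u != val X u -> (forall w, w != u -> val B w = val X w) ->
  val B v != val Y v -> (forall w, w != v -> val B w = val Y w) ->
  val Z = merge (val B) (val X) (val Y) u v ->
  kempe_adj Z X /\ tri X Z.
Proof.
move=> uv nuv [hBY [t0 [hBt hYt]]] bxu bx byv byw hZ.
have vu : v != u by rewrite eq_sym.
have ZX : kempe_adj Z X.
  apply: (kadj_single (v := v)).
    by rewrite hZ ffunE (negbTE vu) eqxx -(bx v vu) eq_sym.
  move=> w wv; rewrite hZ ffunE (negbTE wv).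
  by case: (w =P u) => [->//|/eqP wu]; rewrite -bx.
have [w0 hw0] := triangle (kadj_sym hYt) (kadj_sym hBt) (kadj_sym hBY).
have Yw0 : w0 = v.
  apply/eqP; apply/negP => /negP w0v.
  have := hw0 v; rewrite eq_sym => /(_ w0v) [E1 E2].
  by move: byv; rewrite -E2 E1 eqxx.
subst w0.
have tB : val t0 v != val B v.
  apply/negP => /eqP E; move: (adj_neqv hBt); apply/negP; rewrite negbK.
  by apply/eqP/ffunP => w; case: (w =P v) => [->//|/eqP /hw0 [_ ->]].
have tY : val t0 v != val Y v.
  apply/negP => /eqP E; move: (adj_neqv hYt); apply/negP; rewrite negbK.
  by apply/eqP/ffunP => w; case: (w =P v) => [->//|/eqP /hw0 [-> _]].
have pT : Defs.proper (upd (val X) v (val t0 v)).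
  apply: proper_upd; first exact: valP.
  move=> w avw.
  have wv : w != v by rewrite eq_sym adj_neq.
  have wu : w != u by apply: contraNneq nuv => <-; rewrite (@adj_sym G).
  rewrite -(bx w wu); have [_ <-] := hw0 w wv.
  by rewrite eq_sym; apply: properP (valP t0) avw.
pose T : colouring G k := exist (fun c => Defs.proper c) _ pT.
split => //; split; first exact: kadj_sym.
exists T; split.
- apply: (kadj_single (v := v)); rewrite /= ?ffunE ?eqxx.
    by rewrite -(bx v vu) eq_sym.
  by move=> w wv; rewrite ffunE (negbTE wv).
- apply: (kadj_single (v := v)); rewrite /= hZ ?ffunE ?eqxx ?(negbTE vu).
    by rewrite eq_sym; exact: tY.
  move=> w wv; rewrite !ffunE (negbTE wv).
  by case: (w =P u) => [->//|/eqP wu]; rewrite -bx.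
Qed.

Lemma proper_merge (G : graph) k (B X Y : colouring G k) u v :
  u != v -> ~~ adj u v ->
  (forall w, w != u -> val B w = val X w) ->
  (forall w, w != v -> val B w = val Y w) ->
  Defs.proper (merge (val B) (val X) (val Y) u v).
Proof.
move=> uv nuv bx byw.
have -> : merge (val B) (val X) (val Y) u v = upd (val X) v (val Y v).
  apply/ffunP => w; rewrite !ffunE.
  case: (w =P u) => [->|/eqP wu]; first by rewrite (negbTE uv).
  by case: (w =P v) => [->//|_]; rewrite bx.
apply: proper_upd; first exact: valP.
move=> w avw.
have wv : w != v by rewrite eq_sym adj_neq.
have wu : w != u by apply: contraNneq nuv => <-; rewrite (@adj_sym G).
rewrite -(bx w wu) (byw w wv) eq_sym; exact: properP (valP Y) avw.
Qed.

Section Half.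
Variables (G G' : graph) (k k' : nat).
Variable f : colouring G k -> colouring G' k'.
Variable g : colouring G' k' -> colouring G k.
Hypothesis fK : cancel f g.
Hypothesis gK : cancel g f.
Hypothesis fadj : forall c d, kempe_adj c d <-> kempe_adj (f c) (f d).
Variable c0 : {ffun vert G -> 'I_k}.
Hypothesis pc0 : Defs.proper c0.
Variables a0 a1 : 'I_k.
Hypothesis a01 : a0 != a1.
Hypothesis na0 : forall w, c0 w != a0.
Hypothesis na1 : forall w, c0 w != a1.

Let cc : colouring G k := exist (fun c => Defs.proper c) c0 pc0.

Lemma pxs v : Defs.proper (upd c0 v a0).
Proof. by apply: proper_upd => // w _; apply: na0. Qed.
Lemma pts v : Defs.proper (upd c0 v a1).
Proof. by apply: proper_upd => // w _; apply: na1. Qed.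

Let xs v : colouring G k := exist (fun c => Defs.proper c) _ (pxs v).
Let ts v : colouring G k := exist (fun c => Defs.proper c) _ (pts v).

Lemma tri_xs v : tri cc (xs v).
Proof.
split.
  apply: (kadj_single (v := v)); rewrite /= ?ffunE ?eqxx //.
  by move=> w wv; rewrite ffunE (negbTE wv).
exists (ts v); split.
  apply: (kadj_single (v := v)); rewrite /= ?ffunE ?eqxx //.
  by move=> w wv; rewrite ffunE (negbTE wv).
apply: (kadj_single (v := v)); rewrite /= ?ffunE ?eqxx //.
by move=> w wv; rewrite !ffunE (negbTE wv).
Qed.

Lemma tri_f c x : tri c x -> tri (f c) (f x).
Proof.
move=> [h [t [h1 h2]]]; split; first exact/fadj.
by exists (f t); split; apply/fadj.
Qed.

Lemma tri_g c x : tri (f c) (f x) -> tri c x.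
Proof.
move=> [h [t [h1 h2]]]; split; first exact/fadj.
by exists (g t); split; apply/fadj; rewrite gK.
Qed.

Lemma no_square u v z : adj u v -> z != cc -> tri (xs u) z -> tri (xs v) z -> False.
Proof.
move=> auv zc /tri_single [w1 [d1 e1]] /tri_single [w2 [d2 e2]].
have uv : u != v by apply: adj_neq.
have vu : v != u by rewrite eq_sym.
have xuu : val (xs u) u = a0 by rewrite /= ffunE eqxx.
have xvv : val (xs v) v = a0 by rewrite /= ffunE eqxx.
have xuv : val (xs u) v = c0 v by rewrite /= ffunE (negbTE vu).
have xvu : val (xs v) u = c0 u by rewrite /= ffunE (negbTE uv).
have xuw w : w != u -> val (xs u) w = c0 w by move=> h; rewrite /= ffunE (negbTE h).
have xvw w : w != v -> val (xs v) w = c0 w by move=> h; rewrite /= ffunE (negbTE h).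
have hu : (u == w1) || (u == w2).
  apply: contraT => /norP [/e1 h1 /e2 h2]; move: (na0 u).
  by rewrite -xvu h2 -h1 xuu eqxx.
have hv : (v == w1) || (v == w2).
  apply: contraT => /norP [/e1 h1 /e2 h2]; move: (na0 v).
  by rewrite -xuv h1 -h2 xvv eqxx.
case/orP: hu => /eqP U.
- subst w1; have V2 : v = w2 by case/orP: hv => /eqP // E; move: vu; rewrite E eqxx.
  subst w2; move: zc; apply/negP; rewrite negbK; apply/eqP/val_inj/ffunP => w /=.
  case: (w =P u) => [->|/eqP wu]; first by rewrite -(e2 u uv) xvu.
  by rewrite -(e1 w wu) xuw.
- subst w2; have V1 : v = w1 by case/orP: hv => /eqP // E; move: uv; rewrite E eqxx.
  subst w1.
  have := properP (valP z) auv.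
  by rewrite -(e1 u uv) -(e2 v vu) xuu xvv eqxx.
Qed.


Lemma half_main : exists phi : vert G -> vert G',
  injective phi /\ forall u v, adj u v -> adj (phi u) (phi v).
Proof.
have ex : forall v, exists w, val (f cc) w != val (f (xs v)) w /\
    forall w', w' != w -> val (f cc) w' = val (f (xs v)) w'.
  by move=> v; apply: tri_single; apply: tri_f; apply: tri_xs.
have [phi hphi] := fin_all_exists ex.
have finj : injective f := can_inj fK.
have xsu u v : u != v -> val (xs u) u != val (xs v) u.
  by move=> uv; rewrite /= !ffunE eqxx (negbTE uv) eq_sym na0.
have inj : injective phi.
  move=> u v E; apply/eqP; apply: contraT => uv.
  have [du eu] := hphi u; have [dv ev] := hphi v.
  have ne : val (f (xs u)) != val (f (xs v)).
    apply: contra (xsu u v uv) => /eqP /val_inj /finj ->; exact: eqxx.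
  have A : kempe_adj (f (xs u)) (f (xs v)).
    apply: (kadj_single (v := phi u)).
      apply: contra ne => /eqP E0; apply/eqP/ffunP => w.
      case: (w =P phi u) => [->//|/eqP wn]; by rewrite -eu // -ev // -E.
    by move=> w wn; rewrite -eu // -ev // -E.
  have A' : kempe_adj (xs u) (xs v) by apply/fadj.
  have [w0 hw0] := triangle (tri_xs u).1 (tri_xs v).1 A'.
  have U : u == w0.
    apply: contraT => /hw0 [h _]; move: (na0 u).
    by rewrite h /= ffunE eqxx eqxx.
  have V : v == w0.
    apply: contraT => /hw0 [_ h]; move: (na0 v).
    by rewrite h /= ffunE eqxx eqxx.
  by move: uv; rewrite (eqP U) (eqP V) eqxx.
exists phi; split => // u v auv; apply: contraT => nadj.
have uv : u != v := adj_neq auv.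
have uv' : phi u != phi v by apply: contra uv => /eqP /inj ->.
have [du eu] := hphi u; have [dv ev] := hphi v.
have pZ := proper_merge uv' nadj eu ev.
pose Z : colouring G' k' := exist (fun c => Defs.proper c) _ pZ.
have [ZX triXZ] := sq_half (Z := Z) uv' nadj (tri_f (tri_xs v)) du eu dv ev erefl.
have nadj' : ~~ adj (phi v) (phi u) by rewrite (@adj_sym G').
have vu' : phi v != phi u by rewrite eq_sym.
have [ZY triYZ] := sq_half (Z := Z) (B := f cc) (X := f (xs v)) (Y := f (xs u))
  (u := phi v) (v := phi u) vu' nadj' (tri_f (tri_xs u)) dv ev du eu
  (merge_sym _ _ _ uv').
exfalso; apply: (no_square (z := g Z) auv).
- apply/negP => /eqP E.
  have : val Z (phi u) = val (f cc) (phi u) by rewrite -E gK.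
  rewrite /= ffunE eqxx => E1; by move: du; rewrite E1 eqxx.
- by apply: tri_g; rewrite gK.
- by apply: tri_g; rewrite gK.
Qed.

End Half.

Lemma rich (G : graph) k : chromatic_number G + 1 < k ->
  exists c0 : {ffun vert G -> 'I_k}, exists a0 a1 : 'I_k,
    [/\ Defs.proper c0, a0 != a1, forall w, c0 w != a0 & forall w, c0 w != a1].
Proof.
rewrite /chromatic_number; case: ex_minnP => m /existsP [cm pcm] _ hk.
have le : m <= k by rewrite addn1 in hk; apply: ltnW; apply: ltnW.
have l0 : m < k by rewrite addn1 in hk; apply: ltnW.
have l1 : m.+1 < k by rewrite addn1 in hk.
exists [ffun w => widen_ord le (cm w)], (Ordinal l0), (Ordinal l1); split.
- apply/forallP => x; apply/forallP => y; apply/implyP => axy; rewrite !ffunE.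
  by rewrite -val_eqE /=; have := properP pcm axy; rewrite -val_eqE.
- by rewrite -val_eqE /= neq_ltn ltnSn.
- by move=> w; rewrite ffunE -val_eqE /= neq_ltn ltn_ord.
- by move=> w; rewrite ffunE -val_eqE /= neq_ltn ltnS ltnW // ltn_ord.
Qed.

Unset Implicit Arguments.
Set Strict Implicit.

Theorem theorem1p5 (G G' : graph) (k k' : nat) :
  chromatic_number G + 1 < k ->
  chromatic_number G' + 1 < k' ->
  kempe_graph_iso G k G' k' ->
  graph_iso G G'.
Proof.
move=> hk hk' [f [[g fK gK] fadj]].
have gadj : forall c d, kempe_adj c d <-> kempe_adj (g c) (g d).
  by move=> c d; split => h; [apply/fadj; rewrite !gK | move/fadj: h; rewrite !gK].
have [c0 [a0 [a1 [pc0 a01 na0 na1]]]] := rich hk.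
have [c0' [a0' [a1' [pc0' a01' na0' na1']]]] := rich hk'.
have [phi [iphi ephi]] := half_main fK gK fadj pc0 a01 na0 na1.
have [psi [ipsi epsi]] := half_main gK fK gadj pc0' a01' na0' na1'.
have cV : #|vert G'| <= #|vert G| by apply: leq_card ipsi.
have bphi : bijective phi by apply: inj_card_bij.
exists phi; split => // x y.
pose E := [set p : vert G * vert G | adj p.1 p.2].
pose E' := [set p : vert G' * vert G' | adj p.1 p.2].
pose phi2 := fun p : vert G * vert G => (phi p.1, phi p.2).
pose psi2 := fun p : vert G' * vert G' => (psi p.1, psi p.2).
have iphi2 : injective phi2.
  by move=> [a b] [c d] /= [/iphi -> /iphi ->].
have ipsi2 : injective psi2.
  by move=> [a b] [c d] /= [/ipsi -> /ipsi ->].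
have s1 : phi2 @: E \subset E'.
  by apply/subsetP => p /imsetP [[a b]]; rewrite !inE /= => /ephi h ->.
have s2 : psi2 @: E' \subset E.
  by apply/subsetP => p /imsetP [[a b]]; rewrite !inE /= => /epsi h ->.
have c2 : #|E'| <= #|E|.
  by rewrite -(card_imset _ ipsi2); apply: subset_leq_card.
have EE : phi2 @: E = E'.
  by apply/eqP; rewrite eqEcard s1 (card_imset _ iphi2).
have H2 : adj (phi x) (phi y) -> adj x y.
  move=> h; have : (phi x, phi y) \in E' by rewrite inE.
  rewrite -EE => /imsetP [[a b]]; rewrite inE /= => hab [].
  by move=> /iphi -> /iphi ->.
have H1 := ephi x y.
by case: (adj x y) H1 H2; case: (adj (phi x) (phi y)) => // H1 H2;
  [move: (H1 isT) | move: (H2 isT)].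
Qed.
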